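(* Let $r \ge 3$, $1 \le k \le r-1$ and $p \ge 1$ be integers. There exists $n_0 = n_0(r,k,p)$ such that for all $n \ge n_0$: if $\mathcal{G}$ is an $r$-uniform $n$-vertex hypergraph with \[ |E(\mathcal{G})| \ge 2 r^{r-k} f(r, p r^{r-k}) \binom{n-k-1}{r-k-1}, \] then $\mathcal{G}$ contains a sunflower with $p$ petals whose core has size at most $k$.
   Context: A sunflower with $p$ petals is a collection of $p$ distinct sets $h_1,\dots,h_p$ (here hyperedges of $\mathcal{G}$) together with a set $Y$ (the core) such that $Y \subseteq h_i$ for all $i$ and $h_i \cap h_j = Y$ for all $i \ne j$; the petals are the sets $h_i \setminus Y$. For integers $r,p \ge 1$, $f(r,p)$ denotes the minimum integer such that every $r$-uniform hypergraph with at least $f(r,p)$ hyperedges contains a sunflower with $p$ petals (this is finite by the Erdős–Rado Sunflower Lemma). *)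

(* Defs.v *)
From mathcomp Require Import all_boot.
From mathcomp Require Import boolp.

Set Implicit Arguments.
Unset Strict Implicit.
Unset Printing Implicit Defensive.

Definition uniform (T : finType) (r : nat) (E : {set {set T}}) : Prop :=
  forall e, e \in E -> #|e| = r.

Definition is_sunflower (T : finType) (E : {set {set T}}) (p : nat)
    (h : 'I_p -> {set T}) (Y : {set T}) : Prop :=
  [/\ injective h,
      (forall i, h i \in E),
      (forall i, Y \subset h i) &
      (forall i j, i != j -> h i :&: h j = Y)].

Definition has_sunflower (T : finType) (E : {set {set T}}) (p : nat) : Prop :=
  exists (h : 'I_p -> {set T}) (Y : {set T}), is_sunflower E h Y.

(* m hyperedges force a sunflower with p petals in every r-uniform hypergraph
   (every finite hypergraph is isomorphic to one on 'I_n). *)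
Definition forces_sunflower (r p m : nat) : Prop :=
  forall (n : nat) (E : {set {set 'I_n}}),
    uniform r E -> m <= #|E| -> has_sunflower E p.

(* f(r,p): the minimum such m (exists by the Erdos-Rado sunflower lemma;
   the default 0 in the other branch is never used). *)
Definition f (r p : nat) : nat :=
  match pselect (exists m, `[< forces_sunflower r p m >]) with
  | left H => ex_minn H
  | right _ => 0
  end.

(* Main.v *)
Require Import Defs.
From mathcomp Require Import all_boot.
From mathcomp Require Import boolp.
From mathcomp Require Import zify.

Set Implicit Arguments.
Unset Strict Implicit.
Unset Printing Implicit Defensive.

Lemma card_big_setU' (I : Type) (T : finType) (r : seq I) (P : {pred I})
    (F : I -> {set T}) :
  #|\bigcup_(i <- r | P i)  F i| <= \sum_(i <- r | P i) #|F i|.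
Proof.
elim/big_ind2 : _ => // [|m A n B Am Bn]; first by rewrite cards0.
by rewrite (leq_trans (leq_card_setU _ _))// leq_add.
Qed.

Lemma card_bigcup_seq_le (T : finType) (s : seq {set T}) r :
  (forall a, a \in s -> #|a| = r) -> #|\bigcup_(a <- s) a| <= size s * r.
Proof.
elim: s => [|a s IH] H; first by rewrite big_nil cards0.
rewrite big_cons /= mulSn; apply: leq_trans (leq_card_setU _ _) _.
rewrite H ?mem_head // leq_add2l; apply: IH => b bs; apply: H.
by rewrite inE bs orbT.
Qed.

Lemma sub_bigcup_seq (T : finType) (s : seq {set T}) a :
  a \in s -> a \subset \bigcup_(b <- s) b.
Proof.
elim: s => [|b s IH] //; rewrite inE big_cons => /orP [/eqP ->|as_].
  exact: subsetUl.
by apply: subset_trans (IH as_) _; apply: subsetUr.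
Qed.

Lemma expn_mono a b j : a <= b -> a ^ j <= b ^ j.
Proof.
move=> ab; elim: j => [|j IH] //; rewrite !expnS; exact: leq_mul.
Qed.

Lemma greedy n (E : {set {set 'I_n}}) r B Q :
  uniform r E -> 0 < r ->
  (forall v : 'I_n, #|[set e in E | v \in e]| <= B) ->
  Q * r * B < #|E| ->
  forall q, q <= Q.+1 -> exists s : seq {set 'I_n},
    [/\ size s = q, uniq s, {subset s <= E} &
        (forall a b, a \in s -> b \in s -> a != b -> a :&: b = set0)].
Proof.
move=> uE r0 degB hE; elim=> [|q IH] hq.
  by exists [::]; split.
have [s [ss us sE sd]] := IH (ltnW hq).
set U := \bigcup_(a <- s) a.
have cU : #|U| <= q * r.
  rewrite -ss; apply: card_bigcup_seq_le => a /sE; exact: uE.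
case: (boolP [exists e in E, e :&: U == set0]) => [/existsP [e /andP [eE /eqP eU]]|].
  have enot : e \notin s.
    apply/negP => es.
    have eU' : e \subset U by exact: sub_bigcup_seq.
    move: eU; rewrite (setIidPl eU') => e0.
    by move: (uE _ eE); rewrite e0 cards0 => r0'; rewrite -r0' in r0.
  exists (e :: s); split => //=.
  - by rewrite ss.
  - by rewrite enot.
  - by move=> a; rewrite inE => /orP [/eqP ->|/sE].
  have dis a : a \in s -> e :&: a = set0.
    move=> as_; apply/eqP; rewrite -subset0 -eU; apply: setIS.
    exact: sub_bigcup_seq.
  move=> a b; rewrite !inE => /orP [/eqP ->|as_] /orP [/eqP ->|bs] ab.
  - by rewrite eqxx in ab.
  - exact: dis.
  - by rewrite setIC; apply: dis.
  - exact: sd.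
move/existsPn => nex; exfalso.
have sub : E \subset \bigcup_(v in U) [set e in E | v \in e].
  apply/subsetP => e eE; have := nex e; rewrite eE /= => /set0Pn [v].
  rewrite inE => /andP [ve vU]; apply/bigcupP; exists v => //.
  by rewrite inE eE.
have := leq_trans (subset_leq_card sub) (card_big_setU' _ _ _).
move=> h1.
have h2 : \sum_(v in U) #|[set e in E | v \in e]| <= #|U| * B.
  rewrite -sum_nat_const; apply: leq_sum => v _; exact: degB.
have h3 : #|U| * B <= Q * r * B.
  apply: leq_mul => //; apply: leq_trans cU _; apply: leq_mul => //.
have := leq_ltn_trans (leq_trans h1 (leq_trans h2 h3)) hE.
by rewrite ltnn.
Qed.

Lemma key p j : forall r n (E : {set {set 'I_n}}) D,
  j <= r -> uniform r E ->
  (forall S : {set 'I_n}, #|S| = j -> #|[set e in E | S \subset e]| <= D) ->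
  ((p.-1) * r) ^ j * D < #|E| ->
  exists (h : 'I_p -> {set 'I_n}) Y, is_sunflower E h Y /\ #|Y| < j.
Proof.
elim: j => [|j IH] r n E D jr uE degE hE.
  exfalso; have := degE set0 (cards0 _).
  have -> : [set e in E | set0 \subset e] = E.
    by apply/setP => e; rewrite inE sub0set andbT.
  by move=> c; move: hE; rewrite expn0 mul1n ltnNge c.
set B := ((p.-1) * r) ^ j * D.
case: (boolP [exists v, B < #|[set e in E | v \in e]|]).
  move/existsP => [v hv].
  set L := [set e :\ v | e in [set e in E | v \in e]].
  have cL : #|L| = #|[set e in E | v \in e]|.
    apply: card_in_imset => e1 e2; rewrite !inE => /andP [_ v1] /andP [_ v2] eq.
    by rewrite -(setD1K v1) -(setD1K v2) eq.
  have uL : uniform r.-1 L.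
    move=> e' /imsetP [e]; rewrite inE => /andP [eE ve] ->.
    by move: (cardsD1 v e); rewrite ve uE // add1n => ->.
  have degL : forall S : {set 'I_n}, #|S| = j -> #|[set e in L | S \subset e]| <= D.
    move=> S cS; case: (boolP (v \in S)) => vS.
      have -> : [set e in L | S \subset e] = set0.
        apply/setP => e'; rewrite !inE; apply/negbTE; apply/andP => [[eL Se]].
        move: eL => /imsetP [e _ ee]; move: (subsetP Se v vS); rewrite ee.
        by rewrite !inE eqxx.
      by rewrite cards0.
    have cS' : #|v |: S| = j.+1 by rewrite cardsU1 vS cS.
    apply: leq_trans (degE _ cS'); apply: leq_trans (leq_imset_card (fun e => e :\ v) _).
    apply: subset_leq_card; apply/subsetP => e'; rewrite inE => /andP [eL Se].
    move: eL => /imsetP [e]; rewrite inE => /andP [eE ve] ee.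
    apply/imsetP; exists e => //; rewrite inE eE /= subUset sub1set ve /=.
    by apply: subset_trans (subD1set e v); rewrite -ee.
  have hL : ((p.-1) * r.-1) ^ j * D < #|L|.
    rewrite cL; apply: leq_ltn_trans hv; apply: leq_mul => //.
    by apply: expn_mono; apply: leq_mul => //; apply: leq_pred.
  have jr' : j <= r.-1 by rewrite -ltnS (ltn_predK jr).
  have [h' [Y' [[hinj hL' hY hI] cY]]] := IH r.-1 n L D jr' uL degL hL.
  have vh i : v \notin h' i.
    by move: (hL' i) => /imsetP [e _ ->]; rewrite !inE eqxx.
  exists (fun i => v |: h' i), (v |: Y'); split; last first.
    rewrite cardsU1; apply: leq_ltn_trans (leq_add (leq_b1 _) (leqnn _)) _.
    by rewrite add1n ltnS.
  split.
  - move=> i1 i2 eq; apply: hinj.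
    by rewrite -(setU1K (vh i1)) -(setU1K (vh i2)) eq.
  - move=> i; move: (hL' i) => /imsetP [e]; rewrite inE => /andP [eE ve] ->.
    by rewrite setD1K.
  - by move=> i; apply: setUS.
  - by move=> i1 i2 ne; rewrite -setUIr hI.
move/existsPn => nex.
have degB : forall v, #|[set e in E | v \in e]| <= B.
  by move=> v; rewrite leqNgt; apply: nex.
have r0 : 0 < r by apply: leq_trans jr.
have hE' : p.-1 * r * B < #|E| by rewrite /B mulnA -expnS.
have [s [ss us sE sd]] := greedy uE r0 degB hE' (leqSpred p).
exists (fun i => nth set0 s i), set0; split => //.
split.
- move=> i1 i2 /eqP; rewrite nth_uniq ?ss // => /eqP; exact: val_inj.
- by move=> i; apply: sE; apply: mem_nth; rewrite ss.
- by move=> i; apply: sub0set.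
move=> i1 i2 ne; apply: sd; try (apply: mem_nth; rewrite ss //).
by rewrite nth_uniq ?ss.
by rewrite cards0.
Qed.

Lemma transport (T : finType) (G : {set {set T}}) r M :
  uniform r G -> ~ has_sunflower G M -> ~ forces_sunflower r M #|G|.
Proof.
move=> uG nsf Fo.
pose phi := @enum_rank T.
have phi_inj : injective phi := @enum_rank_inj T.
pose Fi := fun e : {set T} => phi @: e.
pose E := Fi @: G.
have cE : #|E| = #|G| by rewrite card_imset //; apply: imset_inj.
have uE : uniform r E.
  by move=> e' /imsetP [e eG ->]; rewrite card_imset //; apply: uG.
have pre_im (e : {set T}) : phi @^-1: (phi @: e) = e.
  by apply/setP => x; rewrite inE mem_imset.
have [h [Y [hinj hE hY hI]]] := Fo _ E uE (eq_leq (esym cE)).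
apply: nsf; exists (fun i => phi @^-1: h i), (phi @^-1: Y); split.
- move=> i1 i2 eq; apply: hinj.
  move: (hE i1) (hE i2) eq => /imsetP [e1 _ ->] /imsetP [e2 _ ->].
  by rewrite !pre_im => ->.
- by move=> i; move: (hE i) => /imsetP [e eG ->]; rewrite pre_im.
- by move=> i; apply: preimsetS.
- by move=> i1 i2 ne; rewrite -preimsetI hI.
Qed.

Lemma no_prod (r M : nat) : 1 < M -> ~ forces_sunflower r M ((M.-1) ^ r).
Proof.
move=> M1.
pose T := ('I_r * 'I_M.-1)%type.
pose g (x : {ffun 'I_r -> 'I_M.-1}) : {set T} := [set (a, x a) | a in 'I_r].
have memg x a b : ((a, b) \in g x) = (x a == b).
  apply/imsetP/eqP => [[a' _ [-> ->]] //|<-]; by exists a.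
have ginj : injective g.
  move=> x y eq; apply/ffunP => a; apply/eqP; rewrite -memg eq memg //.
pose G := g @: [set: {ffun 'I_r -> 'I_M.-1}].
have cG : #|G| = M.-1 ^ r by rewrite card_imset // cardsT card_ffun !card_ord.
have uG : uniform r G.
  move=> e /imsetP [x _ ->]; rewrite card_imset ?card_ord //.
  by move=> a b [].
rewrite -cG; apply: transport => // -[h [Y [hinj hG hY hI]]].
have : forall i, exists x, h i = g x.
  by move=> i; move: (hG i) => /imsetP [x _ ->]; exists x.
move/fin_all_exists => [X hX].
have M0 : 0 < M by apply: ltnW.
pose i0 : 'I_M := Ordinal M0.
pose i1 : 'I_M := Ordinal M1.
have col a : X i0 a = X i1 a.
  have [i [l [il eq]]] : exists i l, i != l /\ X i a = X l a.
    apply: contrapT => nE.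
    have inj : injective (fun i => X i a).
      move=> i l eq; apply/eqP; apply: contraT => ne; case: nE.
      by exists i, l.
    move: (leq_card _ inj); rewrite !card_ord.
    by rewrite leqNgt ltn_predL M0.
  have inY : (a, X i a) \in Y.
    by rewrite -(hI i l il) inE !hX !memg eq !eqxx.
  have all m : X m a = X i a.
    by apply/eqP; rewrite -memg -hX; apply: (subsetP (hY m)).
  by rewrite !all.
have : i0 = i1 by apply: hinj; rewrite !hX; congr g; apply/ffunP.
by move/(congr1 val).
Qed.

Theorem lemma10 (r k p : nat) :
  3 <= r -> 1 <= k <= r - 1 -> 1 <= p ->
  exists n0 : nat, forall (n : nat), n0 <= n ->
    forall E : {set {set 'I_n}}, uniform r E ->
      2 * r ^ (r - k) * f r (p * r ^ (r - k)) * 'C(n - k - 1, r - k - 1) <= #|E| ->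
      exists (h : 'I_p -> {set 'I_n}) (Y : {set 'I_n}),
        is_sunflower E h Y /\ #|Y| <= k.
Proof.
move=> r3 /andP [k1 kr] p1.
set M := p * r ^ (r - k).
have r0 : 0 < r by apply: leq_trans r3.
have rk : 1 <= r - k by lia.
have rM : r <= r ^ (r - k) by rewrite -{1}(expn1 r); apply: leq_pexp2l.
have pM : p * r <= M by apply: leq_mul.
have M1 : 1 < M.
  apply: leq_trans pM; apply: leq_trans (leq_pmull _ p1); exact: leq_trans r3.
have ER : forces_sunflower r M ((((M.-1) * r) ^ r * 1).+1).
  move=> n E uE hE.
  have degE : forall S : {set 'I_n}, #|S| = r -> #|[set e in E | S \subset e]| <= 1.
    move=> S cS; rewrite -(cards1 S); apply: subset_leq_card; apply/subsetP => e.
    by rewrite !inE => /andP [eE Se]; rewrite eq_sym eqEcard Se /= uE // cS.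
  have [h [Y [sf _]]] := key (leqnn r) uE degE hE.
  by exists h, Y.
have [FF minF] : forces_sunflower r M (f r M) /\
    forall m, forces_sunflower r M m -> f r M <= m.
  rewrite /f; case: pselect => [H|nH]; last first.
    by exfalso; apply: nH; exists ((((M.-1) * r) ^ r * 1).+1); apply/asboolP.
  case: ex_minnP => m /asboolP Fm minm; split => // m' Fm'; apply: minm.
  exact/asboolP.
have lowF : (M.-1) ^ r < f r M.
  rewrite ltnNge; apply/negP => le; apply: (@no_prod r M M1).
  by move=> n E uE cE; apply: FF uE (leq_trans le cE).
exists r => n nr E uE hE.
set D := 'C(n - k - 1, r - k - 1).
have D0 : 0 < D.
  rewrite bin_gt0; lia.
have kr' : k.+1 <= r by lia.
have degE : forall S : {set 'I_n}, #|S| = k.+1 ->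
    #|[set e in E | S \subset e]| <= D.
  move=> S cS.
  have inj : {in [set e in E | S \subset e] &, injective (fun e => e :\: S)}.
    move=> e1 e2; rewrite !inE => /andP [_ S1] /andP [_ S2] eq.
    by rewrite -(setID e1 S) -(setID e2 S) eq (setIidPr S1) (setIidPr S2).
  rewrite -(card_in_imset inj).
  have cC : #|~: S| = n - k - 1 by move: (cardsC S); rewrite card_ord cS; lia.
  rewrite /D -cC -cards_draws; apply: subset_leq_card; apply/subsetP => A.
  move=> /imsetP [e]; rewrite inE => /andP [eE Se] ->.
  rewrite inE; apply/andP; split; first by rewrite setDE subsetIr.
  rewrite cardsD (setIidPr Se) uE // cS; apply/eqP; lia.
have hb : ((p.-1) * r) ^ k.+1 * D < #|E|.
  apply: leq_trans hE; rewrite ltn_pmul2r //.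
  have h1 : (p.-1) * r <= M.-1.
    have e : p * r = p.-1 * r + r by rewrite -{1}(prednK p1) mulSn addnC.
    lia.
  apply: leq_ltn_trans (expn_mono _ h1) _.
  apply: leq_ltn_trans (leq_pexp2l _ kr') _; first lia.
  apply: leq_trans lowF _; apply: leq_pmull.
  by rewrite muln_gt0 expn_gt0 r0.
have [h [Y [sf cY]]] := key kr' uE degE hb.
by exists h, Y.
Qed.
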